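(* Let $n$ be odd. Then $$M_{Q_{4n}}\!\Big(1+(x^n+1)(x+x^2+\cdots+x^{(n-1)/2})+y\,(x^n+1)(x+x^2+\cdots+x^{(n-1)/2})\Big)=2n-1,$$ and $M_{Q_{4n}}(x^2+1)=16$. In particular $\lambda(Q_{4n})\le\min\{16,2n-1\}$ whenever $n\ge 3$ is odd.
   Context: $Q_{4n}=\langle x,y : x^{2n}=1,\ y^2=x^n,\ xy=yx^{-1}\rangle$. For $f,g\in\mathbb Z[x]$, $M_{Q_{4n}}(f+yg)=\prod_{z^{2n}=1}\big(f(z)f(z^{-1})-z^ng(z)g(z^{-1})\big)$ (the integer group determinant of $Q_{4n}$). $\lambda(G)$ is the smallest absolute value $\ge2$ of an integer group determinant of $G$. *)

(* Defs.v *)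
From HB Require Import structures.
From mathcomp Require Import all_boot all_order all_algebra all_field.
Set Implicit Arguments. Unset Strict Implicit. Unset Printing Implicit Defensive.
Import Order.TTheory GRing.Theory Num.Theory.
Local Open Scope ring_scope.

(* A fixed primitive (2n)-th root of unity in algC (for n >= 1; for n = 0 the
   index set below is empty anyway). *)
Definition zeta2n (n : nat) : algC :=
  sval (C_prim_root_exists (ltn0Sn (2 * n).-1)).

Definition evC (p : {poly int}) (z : algC) : algC :=
  (map_poly (fun a : int => a%:~R) p).[z].

(* Integer group determinant of Q_{4n} at f + y g:
   prod_{z^{2n}=1} ( f(z) f(z^-1) - z^n g(z) g(z^-1) ),
   the 2n-th roots of unity being enumerated as zeta2n n ^+ k, k < 2n. *)
Definition MQ (n : nat) (f g : {poly int}) : algC :=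
  \prod_(k < 2 * n)
    (let z := zeta2n n ^+ k in
     evC f z * evC f z^-1 - z ^+ n * evC g z * evC g z^-1).

Definition is_lambdaQ (n : nat) (l : nat) : Prop :=
  [/\ (2 <= l)%N,
      (exists f g : {poly int}, `|MQ n f g| = l%:R) &
      (forall (f g : {poly int}) (k : nat),
          (2 <= k)%N -> `|MQ n f g| = k%:R -> (l <= k)%N)].

Definition hQ (n : nat) : {poly int} :=
  ('X^n + 1) * \sum_(1 <= i < (n.-1)./2 .+1) 'X^i.

(* Main.v *)
Require Import Defs.
From HB Require Import structures.
From mathcomp Require Import all_boot all_order all_algebra all_field.
From mathcomp Require Import zify ring.
From Stdlib Require Import Classical.
Import Order.TTheory GRing.Theory Num.Theory.
Local Open Scope ring_scope.

Lemma split_eo (F : nat -> algC) n :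
  \prod_(k < 2 * n) F k = \prod_(i < n) F (2 * i)%N * \prod_(i < n) F (2 * i + 1)%N.
Proof.
elim: n => [|n IH]; first by rewrite !big_ord0 mulr1.
have -> : (2 * n.+1 = (2 * n).+1.+1)%N by lia.
rewrite big_ord_recr big_ord_recr /= IH [in RHS]big_ord_recr [in RHS]big_ord_recr /=.
rewrite addn1 -!mulrA; congr (_ * _); rewrite mulrCA; congr (_ * _); by rewrite mulrC.
Qed.

Lemma split_hh (F : nat -> algC) n :
  \prod_(k < 2 * n) F k = \prod_(i < n) F i * \prod_(i < n) F (n + i)%N.
Proof.
rewrite -!(big_mkord xpredT) (big_cat_nat (n := n)) //=; last by lia.
rewrite -{2}(add0n n) big_addn.
have -> : (2 * n - n = n)%N by lia.
by rewrite !big_mkord; congr (_ * _); apply: eq_bigr => i _; rewrite addnC.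
Qed.

Lemma zeta_prim n : (0 < n)%N -> (2 * n).-primitive_root (zeta2n n).
Proof.
move=> n0; rewrite /zeta2n; case: (C_prim_root_exists _) => z /=.
by rewrite prednK // muln_gt0.
Qed.

Lemma zeta_n n : (0 < n)%N -> zeta2n n ^+ n = -1.
Proof.
move=> n0; have pr := (@zeta_prim n n0).
have h2 : (zeta2n n ^+ n) ^+ 2 = 1 by rewrite -exprM mulnC (prim_expr_order pr).
have hne : zeta2n n ^+ n != 1.
  by rewrite -(expr0 (zeta2n n)) (eq_prim_root_expr pr) mod0n modn_small //; lia.
by move: h2 => /eqP; rewrite sqrf_eq1 (negbTE hne) /= => /eqP.
Qed.

Lemma omega_prim n : (0 < n)%N -> n.-primitive_root (zeta2n n ^+ 2).
Proof.
move=> n0; have := dvdn_prim_root ((@zeta_prim n n0)) (dvdn_mull 2 (dvdnn n)).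
by rewrite mulnK.
Qed.

Lemma geo0 (w : algC) n : w ^+ n = 1 -> w != 1 -> \sum_(i < n) w ^+ i = 0.
Proof.
move=> wn w1; have : (w - 1) * \sum_(i < n) w ^+ i = 0 by rewrite -subrX1 wn subrr.
by move/eqP; rewrite mulf_eq0 subr_eq0 (negbTE w1) /= => /eqP.
Qed.

Lemma prod_roots n (w : algC) x : n.-primitive_root w ->
  \prod_(i < n) (x - w ^+ i) = x ^+ n - 1.
Proof.
move=> pw; have :=  congr1 (fun p => p.[x]) (factor_Xn_sub_1 pw).
by rewrite /= horner_prod big_mkord !hornerE => <-; apply: eq_bigr => i _; rewrite !hornerE.
Qed.
Lemma ev1 (z : algC) : evC ('X^2+1) z = z^+2+1.
Proof. by rewrite /evC rmorphD /= map_polyXn rmorph1 !hornerE. Qed.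
Lemma ev0 (z : algC) : evC 0 z = 0.
Proof. by rewrite /evC rmorph0 hornerE. Qed.
Lemma evh n (z : algC) : evC (hQ n) z = (z^+n + 1) * \sum_(1 <= i < (n.-1)./2 .+1) z^+i.
Proof. rewrite /evC /hQ rmorphM rmorphD /= map_polyXn rmorph1 rmorph_sum /= hornerM.
rewrite horner_sum !hornerE; congr (_ * _); apply: eq_bigr => i _; by rewrite map_polyXn hornerXn. Qed.
Lemma ev1h n (z : algC) : evC (1 + hQ n) z = 1 + evC (hQ n) z.
Proof. by rewrite /evC rmorphD rmorph1 /= hornerD hornerC. Qed.

Lemma sgn_odd n : odd n -> (-1 : algC) ^+ n = -1.
Proof. by move=> no; rewrite -signr_odd no expr1. Qed.

Lemma prodA n (w : algC) : odd n -> n.-primitive_root w ->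
  \prod_(i < n) (w ^+ i + 1) = 2 /\ \prod_(i < n) w ^+ i = 1.
Proof.
move=> no pw; have h1 := prod_roots _ _ (-1) pw; have h0 := prod_roots _ _ 0 pw.
have e : forall i : 'I_n, -1 - w ^+ i = -1 * (w ^+ i + 1) by move=> i; ring.
rewrite (eq_bigr _ (fun i _ => e i)) big_split /= prodr_const card_ord sgn_odd // in h1.
have e0 : forall i : 'I_n, 0 - w ^+ i = -1 * (w ^+ i) by move=> i; ring.
rewrite (eq_bigr _ (fun i _ => e0 i)) big_split /= prodr_const card_ord sgn_odd // in h0.
have n0 : (0 < n)%N by case: n no {h1 h0 e e0 pw}.
rewrite expr0n /= eqn0Ngt n0 /= in h0.
split.
  set P := \prod_(i < n) _ in h1 *. have -> : P = - (-1 * P) by ring.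
  by rewrite h1; ring.
set P := \prod_(i < n) _ in h0 *. have -> : P = - (-1 * P) by ring.
by rewrite h0; ring.
Qed.

Lemma part2 n : odd n -> MQ n ('X^2 + 1) 0 = 16%:R.
Proof.
move=> no; have n0 : (0 < n)%N by case: n no.
have zn := @zeta_n n n0; have pw := @omega_prim n n0.
have pz := @zeta_prim n n0.
set z := zeta2n n in zn pw pz *.
have z0 : z != 0.
  by apply/negP => /eqP z0; move: zn; rewrite z0 expr0n eqn0Ngt n0 /= => /eqP; rewrite eq_sym oppr_eq0 oner_eq0.
pose G (w : algC) := (w + 1) * (w^-1 + 1).
pose F (k : nat) := (let x := z ^+ k in evC ('X^2 + 1) x * evC ('X^2 + 1) x^-1 - x ^+ n * evC 0 x * evC 0 x^-1).
have -> : MQ n ('X^2 + 1) 0 = \prod_(k < 2 * n) F k by rewrite /MQ /F.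
have E1 : forall i, F i = G ((z ^+ 2) ^+ i).
  move=> i; rewrite /F /= !ev1 !ev0 !mulr0 subr0 exprVn -!exprM mulnC.
  by rewrite /G.
have E2 : forall i, F (n + i)%N = G ((z ^+ 2) ^+ i).
  move=> i; rewrite /F /= !ev1 !ev0 !mulr0 subr0 exprVn exprD zn mulN1r sqrrN -!exprM mulnC.
  by rewrite /G.
have Q1 : \prod_(i < n) F i = \prod_(i < n) G ((z ^+ 2) ^+ i) by apply: eq_bigr => i _; exact: E1.
have Q2 : \prod_(i < n) F (n + i)%N = \prod_(i < n) G ((z ^+ 2) ^+ i) by apply: eq_bigr => i _; exact: E2.
rewrite split_hh Q1 Q2.
have [P1 P2] := prodA _ _ no pw.
have -> : \prod_(i < n) G ((z ^+ 2) ^+ i) = 2 * 2.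
  rewrite /G big_split /= P1.
  have e : forall i : 'I_n, ((z ^+ 2) ^+ i)^-1 + 1 = ((z ^+ 2) ^+ i)^-1 * ((z ^+ 2) ^+ i + 1).
    move=> i; rewrite mulrDr mulr1 mulVf; first by rewrite addrC.
    by rewrite !expf_neq0.
  have Q3 : \prod_(i < n) (((z ^+ 2) ^+ i)^-1 + 1) = \prod_(i < n) (((z ^+ 2) ^+ i)^-1 * ((z ^+ 2) ^+ i + 1)).
    by apply: eq_bigr => i _; exact: e.
  rewrite Q3 big_split /= prodfV P1 P2 invr1 mul1r.
  reflexivity.
by rewrite -!natrM.
Qed.
Lemma symS m (z : algC) : z ^+ (m.*2.+1) = 1 ->
  \sum_(1 <= i < m.+1) z ^+ i + \sum_(1 <= i < m.+1) z^-1 ^+ i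
  = \sum_(i < m.*2.+1) z ^+ i - 1.
Proof.
move=> zn.
have z0 : z != 0.
  by apply/negP => /eqP z0; move: zn; rewrite z0 expr0n /= => /eqP; rewrite eq_sym oner_eq0.
have zi : forall i, (i <= m.*2.+1)%N -> z^-1 ^+ i = z ^+ (m.*2.+1 - i).
  move=> i hi; rewrite exprVn; apply: (@mulIf _ (z ^+ i)); first by rewrite expf_neq0.
  by rewrite mulVf ?expf_neq0 // -exprD subnK.
have S2 : \sum_(1 <= i < m.+1) z^-1 ^+ i = \sum_(1 <= i < m.+1) z ^+ (i + m).
  rewrite (eq_big_nat _ _ (F2 := fun i => z ^+ (m.*2.+1 - i))); last first.
    by move=> i /andP [h1 h2]; apply: zi; lia.
  rewrite big_nat_rev /=; apply: eq_big_nat => i /andP [h1 h2]; congr (_ ^+ _); lia.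
have e2 : \sum_(1 + m <= i < m.*2.+1) z ^+ i = \sum_(1 <= i < m.+1) z ^+ (i + m).
  rewrite big_addn; have -> : (m.*2.+1 - m = m.+1)%N by lia.
  by [].
rewrite S2 -e2 add1n -big_cat_nat; [|lia|lia].
rewrite -(big_mkord xpredT (fun i => z ^+ i)) (big_ltn (ltn0Sn _)) expr0.
by rewrite [1 + _]addrC addrK.
Qed.

Definition Tm n (z : algC) := evC (1 + hQ n) z * evC (1 + hQ n) z^-1 - z ^+ n * evC (hQ n) z * evC (hQ n) z^-1.

Lemma term_neg n (z : algC) : z ^+ n = -1 -> Tm n z = 1.
Proof.
move=> zn; rewrite /Tm !ev1h !evh exprVn zn invrN1 addNr !mul0r.
by rewrite !addr0 mulr1 !mulr0 subr0.
Qed.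

Lemma term_pos m (z : algC) : z ^+ (m.*2.+1) = 1 ->
  Tm (m.*2.+1) z = 2 * \sum_(i < m.*2.+1) z ^+ i - 1.
Proof.
move=> zn; rewrite /Tm !ev1h !evh exprVn zn invr1 /= doubleK.
set a := \sum_(1 <= i < m.+1) z ^+ i.
set b := \sum_(1 <= i < m.+1) z^-1 ^+ i.
transitivity (1 + 2 * (a + b)); first by ring.
by rewrite /a /b symS //; ring.
Qed.

Lemma part1 n : odd n -> MQ n (1 + hQ n) (hQ n) = (2 * n - 1)%:R.
Proof.
move=> no; have [m em] : exists m, n = m.*2.+1.
  by exists n./2; rewrite -{1}(odd_double_half n) no add1n.
subst n; set N := m.*2.+1.
have n0 : (0 < N)%N by [].
have zn := @zeta_n N n0; have pw := @omega_prim N n0.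
set z := zeta2n N in zn pw *.
have -> : MQ N (1 + hQ N) (hQ N) = \prod_(k < 2 * N) Tm N (z ^+ k) by rewrite /MQ /Tm.
rewrite (split_eo (fun k => Tm N (z ^+ k))).
have Od : \prod_(i < N) Tm N (z ^+ (2 * i + 1)) = 1.
  apply: big1 => i _; apply: term_neg.
  rewrite -exprM mulnC exprM zn -signr_odd oddD oddM /=.
  by rewrite expr1.
have Ev : \prod_(i < N) Tm N (z ^+ (2 * i)) = \prod_(i < N) (2 * \sum_(j < N) ((z ^+ 2) ^+ i) ^+ j - 1).
  apply: eq_bigr => i _; rewrite exprM; apply: term_pos.
  by rewrite -exprM mulnC exprM (prim_expr_order pw) expr1n.
rewrite Od mulr1 Ev big_ord_recl /=.
have R : \prod_(i < m.*2) (2 * \sum_(j < N) ((z ^+ 2) ^+ bump 0 i) ^+ j - 1) = \prod_(i < m.*2) (-1 : algC).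
  apply: eq_bigr => i _; rewrite geo0 ?mulr0 ?sub0r //.
    by rewrite exprAC (prim_expr_order pw) expr1n.
  rewrite -[X in _ != X](expr0 (z ^+ 2)) (eq_prim_root_expr pw) mod0n modn_small //.
  rewrite /bump /=; have := ltn_ord i; rewrite /N; lia.
rewrite R prodr_const card_ord -signr_odd odd_double expr0 mulr1.
have -> : \sum_(j < N) (1 : algC) ^+ j = N%:R.
  by rewrite (eq_bigr (fun _ => 1)) ?sumr_const ?card_ord // => j _; rewrite expr1n.
by rewrite natrB ?natrM //; lia.
Qed.
Lemma min_ex (P : nat -> Prop) N : P N -> exists l, P l /\ forall k, P k -> (l <= k)%N.
Proof.
elim/ltn_ind: N => N IH PN.
case: (classic (exists k, P k /\ (k < N)%N)) => [[k [Pk lk]] | H].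
  exact: IH lk Pk.
exists N; split => // k Pk; rewrite leqNgt; apply/negP => lt; apply: H; by exists k.
Qed.

Theorem mainTheorem8 (n : nat) (n_odd : odd n) :
  [/\ MQ n (1 + hQ n) (hQ n) = (2 * n - 1)%:R,
      MQ n ('X^2 + 1) 0 = 16%:R &
      ((3 <= n)%N -> exists l : nat, is_lambdaQ n l /\ (l <= minn 16 (2 * n - 1))%N)].
Proof.
have p1 := part1 n n_odd; have p2 := part2 n n_odd.
split => // n3.
pose P k := (2 <= k)%N /\ exists f g : {poly int}, `|MQ n f g| = k%:R.
have P16 : P 16%N by split => //; exists ('X^2 + 1), 0; rewrite p2 normr_nat.
have Pn : P (2 * n - 1)%N by split; [lia | exists (1 + hQ n), (hQ n); rewrite p1 normr_nat].
have [l [[l2 [f [g hl]]] lmin]] := min_ex P _ P16.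
exists l; split.
  split => //; first by exists f, g.
  by move=> f' g' k k2 hk; apply: lmin; split => //; exists f', g'.
by rewrite leq_min (lmin _ P16) (lmin _ Pn).
Qed.
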